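(* For all positive integers $n$ and $k$, $$\sum_{i=1}^{k}\frac{(-1)^{i-1}}{i}\binom{in}{k}\binom{k}{i}=\frac{(-1)^{k-1}n}{k}.$$
   Context: Binomial coefficients $\binom{m}{j}$ for nonnegative integers $m,j$ are the usual ones, with $\binom{m}{j}=0$ when $j>m$. *)

(* Defs.v *)
From mathcomp Require Import all_boot all_order all_algebra.

(* Main.v *)
Require Import Defs.
From mathcomp Require Import all_boot all_order all_algebra.
From mathcomp Require Import ring zify.
Import GRing.Theory Num.Theory.
Local Open Scope ring_scope.

Lemma size_le_coef (r : {poly rat}) d :
  (size r <= d.+1)%N -> r`_d = 0 -> (size r <= d)%N.
Proof.
move=> h1 h2; move: h1; rewrite leq_eqVlt ltnS => /orP[/eqP hs|//].
have : lead_coef r = 0 by rewrite /lead_coef hs.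
by move/eqP; rewrite lead_coef_eq0 => /eqP ->; rewrite size_poly0.
Qed.

Lemma size_shift (p : {poly rat}) :
  (size (p - (p \Po ('X + 1%:P)))%R <= (size p).-1)%N.
Proof.
have hs : size (p \Po ('X + 1%:P)) = size p by rewrite size_comp_poly2 // size_XaddC.
have hl : lead_coef (p \Po ('X + 1%:P)) = lead_coef p.
  by rewrite lead_coef_comp ?size_XaddC // lead_coefXaddC expr1n mulr1.
case E: (size p) => [|d] /=.
  by move/eqP: E; rewrite size_poly_eq0 => /eqP ->; rewrite comp_poly0 subr0 size_poly0.
apply: size_le_coef.
  by rewrite -E (leq_trans (size_add _ _)) // size_opp hs maxnn.
have h1 : lead_coef p = p`_d by rewrite /lead_coef E.
have h2 : lead_coef (p \Po ('X + 1%:P)) = (p \Po ('X + 1%:P))`_d by rewrite /lead_coef hs E.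
by rewrite coefB -h1 -h2 hl subrr.
Qed.

Lemma diff k : forall p : {poly rat}, (size p <= k)%N ->
  \sum_(0 <= i < k.+1) (-1) ^+ i * ('C(k, i))%:R * p.[i%:R] = 0.
Proof.
elim: k => [|k IH] p hp.
  move: hp; rewrite leqn0 size_poly_eq0 => /eqP ->.
  by rewrite big_nat1 horner0 mulr0.
have hq : ((size p).-1 <= k)%N by move: hp; case: (size p).
apply: etrans (IH _ (leq_trans (size_shift p) hq)).
rewrite big_nat_recl //.
under eq_bigr do rewrite binS natrD mulrDr mulrDl.
rewrite big_split /= addrA.
have -> : (-1) ^+ 0 * ('C(k.+1, 0))%:R * p.[0%:R] +
   \sum_(0 <= i < k.+1) (-1) ^+ i.+1 * ('C(k, i.+1))%:R * p.[i.+1%:R]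
   = \sum_(0 <= i < k.+2) (-1) ^+ i * ('C(k, i))%:R * p.[i%:R] :> rat.
  by rewrite [RHS]big_nat_recl // !bin0.
rewrite big_nat_recr //= bin_small // mulr0 mul0r addr0.
rewrite -big_split /=; apply: eq_bigr => i _.
rewrite hornerD hornerN horner_comp hornerD hornerX hornerC exprS.
rewrite -[i.+1%:R]natr1. ring.
Qed.

Lemma ffact_rat (m r : nat) :
  ((m ^_ r)%:R : rat) = \prod_(j < r) (m%:R - j%:R).
Proof.
elim: r => [|r IH]; first by rewrite ffactn0 big_ord0.
rewrite ffactnSr big_ord_recr /= -IH natrM.
case: (leqP r m) => h; first by rewrite natrB.
by rewrite ffact_small // !mul0r.
Qed.

Lemma prod_neg (r : nat) :
  \prod_(j < r) (- (j.+1)%:R) = (-1) ^+ r * (r`!)%:R :> rat.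
Proof.
elim: r => [|r IH]; first by rewrite big_ord0 fact0 mulr1.
rewrite big_ord_recr /= IH factS natrM exprS. ring.
Qed.

Definition PP (n k : nat) : {poly rat} :=
  \prod_(j < k.-1) ('X * (n%:R)%:P - ((j.+1)%:R)%:P).

Lemma size_PP n k : (0 < k)%N -> (size (PP n k) <= k)%N.
Proof.
move=> hk; rewrite /PP.
apply: leq_trans (size_poly_prod_leq _ _) _.
have h : (\sum_(j < k.-1) size (('X * (n%:R)%:P - ((j.+1)%:R)%:P)%R : {poly rat}) <= (k.-1).*2)%N.
  rewrite -muln2 -[X in (_ <= X * 2)%N]card_ord -sum_nat_const.
  apply: leq_sum => j _.
  apply: leq_trans (size_add _ _) _; rewrite size_opp size_polyC geq_max.
  rewrite (leq_trans (size_mul_leq _ _)) ?size_polyX ?size_polyC //.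
  by case: (_ != _).
  by case: (_ != _).
rewrite cardE size_enum_ord.
move: h; move: (\sum_(j < k.-1) _)%N => s hs; lia.
Qed.

Lemma PP_eval n k (x : rat) : (PP n k).[x] = \prod_(j < k.-1) (x * n%:R - (j.+1)%:R).
Proof.
rewrite /PP horner_prod; apply: eq_bigr => j _.
by rewrite hornerD hornerN hornerM hornerX !hornerC.
Qed.

Theorem mainTheorem6 (n k : nat) (hn : (0 < n)%N) (hk : (0 < k)%N) :
  \sum_(1 <= i < k.+1) ((-1) ^+ i.-1 / i%:R * ('C(i * n, k))%:R * ('C(k, i))%:R : rat)
  = (-1) ^+ k.-1 * n%:R / k%:R.
Proof.
have hk0 : (k%:R : rat) != 0 by rewrite pnatr_eq0 -lt0n.
have hf0 : ((k.-1)`!%:R : rat) != 0 by rewrite pnatr_eq0 -lt0n fact_gt0.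
set c : rat := n%:R / (k%:R * (k.-1)`!%:R).
have step : forall i, (0 < i)%N ->
  (-1) ^+ i.-1 / i%:R * ('C(i * n, k))%:R * ('C(k, i))%:R
  = - c * ((-1) ^+ i * ('C(k, i))%:R * (PP n k).[i%:R]).
  move=> i hi.
  have hi0 : (i%:R : rat) != 0 by rewrite pnatr_eq0 -lt0n.
  have hin : (0 < i * n)%N by rewrite muln_gt0 hi hn.
  have hC : (('C(i * n, k))%:R : rat) = (i * n)%:R * ('C((i * n).-1, k.-1))%:R / k%:R.
    have := mul_bin_diag (i * n) k.-1; rewrite prednK // => h.
    rewrite -natrM h natrM; field; exact: hk0.
  have hP : (PP n k).[i%:R] = ('C((i * n).-1, k.-1))%:R * (k.-1)`!%:R.
    rewrite PP_eval -natrM bin_ffact ffact_rat; apply: eq_bigr => j _.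
    have e : ((i * n)%:R : rat) = ((i * n).-1)%:R + 1 by rewrite natr1 prednK.
    rewrite -natrM e -natr1. ring.
  rewrite hC hP -(prednK hi) exprS /c.
  rewrite prednK // natrM.
  field.
  by rewrite hi0 hk0 hf0.
rewrite (eq_big_nat _ _ (fun i hi => step i (andP hi).1)) -mulr_sumr.
have hd := @diff k _ (size_PP n k hk).
rewrite big_ltn // in hd.
have -> : \sum_(1 <= i < k.+1) (-1) ^+ i * ('C(k, i))%:R * (PP n k).[i%:R]
  = - ((-1) ^+ 0 * ('C(k, 0))%:R * (PP n k).[0%:R]).
  by apply/eqP; rewrite -addr_eq0 addrC hd.
rewrite PP_eval.
under eq_bigr do rewrite mul0r add0r.
rewrite prod_neg /c expr0 bin0 mul1r.
field.
by rewrite hk0 hf0.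
Qed.
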